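(* Let $d\ge1$ and let $F$ be a modular form of odd weight $2k+1$ (with trivial character) for $\widetilde{\mathrm{SO}}^+(L_{2d})$. Then for every primitive $r\in L_{2d}$ with $r^2=-2d$ such that the reflection $\sigma_r$ lies in $\mathrm O(L_{2d})$, $F$ vanishes on the divisor $\{[Z]\in\mathcal D_{L_{2d}}\mid (Z,r)=0\}$.
   Context: $L_{2d}=2U\oplus2E_8(-1)\oplus\langle-2d\rangle$. $\mathcal D_{L_{2d}}$ is one of the two components of $\{[w]\in\mathbb P(L_{2d}\otimes\mathbb C)\mid (w,w)=0,(w,\bar w)>0\}$. $\widetilde{\mathrm{SO}}^+(L_{2d})$ consists of elements of $\mathrm{SO}(L_{2d})$ preserving $\mathcal D_{L_{2d}}$ and acting trivially on $L_{2d}^\vee/L_{2d}$. A modular form of weight $m$ is a holomorphic function $F$ on the affine cone over $\mathcal D_{L_{2d}}$ with $F(tZ)=t^{-m}F(Z)$ for $t\in\mathbb C^*$ and $F(gZ)=F(Z)$ for $g$ in the group. $\sigma_r(x)=x-\frac{2(x,r)}{(r,r)}r$. *)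

(* Defs.v *)
From HB Require Import structures.
From mathcomp Require Import all_boot all_order all_algebra.
From mathcomp Require Import complex Rstruct.
From Stdlib Require Rdefinitions.

Set Implicit Arguments.
Unset Strict Implicit.
Unset Printing Implicit Defensive.
Import Order.TTheory GRing.Theory Num.Theory.
Local Open Scope ring_scope.

Definition C : numClosedFieldType := complex Rdefinitions.R.

(* Rank of L_{2d} = 2U + 2E8(-1) + <-2d>  :  2+2+8+8+1 = 21. *)
Definition rk : nat := 21.

(* E8 Dynkin diagram on nodes 0..7: chain 0-1-2-3-4-5-6 and node 7 attached
   to node 4 (arms of lengths 4, 2, 1 from the branch node 4). *)
Definition e8adj (i j : nat) : bool :=
  ((i <= 6) && (j <= 6) && ((i == j.+1) || (j == i.+1)))%N
  || ((i == 4) && (j == 7))%N || ((i == 7) && (j == 4))%N.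

(* Gram matrix in the basis
   0,1 : e1,f1 (first U);  2,3 : e2,f2 (second U);
   4..11 : simple roots of the first E8(-1);  12..19 : of the second E8(-1);
   20 : generator h of <-2d>. *)
Definition gramf (d : nat) (i j : nat) : int :=
  if i == j then
    (if (i < 4)%N then 0 else if (i < 20)%N then -2 else - ((2 * d)%N : int))
  else if [|| (i == 0) && (j == 1), (i == 1) && (j == 0),
              (i == 2) && (j == 3) | (i == 3) && (j == 2)]%N then 1
  else if [&& 4 <= i, i < 12, 4 <= j, j < 12 & e8adj (i - 4) (j - 4)]%N then 1
  else if [&& 12 <= i, i < 20, 12 <= j, j < 20 & e8adj (i - 12) (j - 12)]%N
  then 1
  else 0.

Definition gram (d : nat) : 'M[int]_rk := \matrix_(i < rk, j < rk) gramf d i j.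

Definition lat := 'cV[int]_rk.

Definition toQ (x : 'cV[int]_rk) : 'cV[rat]_rk := map_mx intr x.
Definition toC (x : 'cV[int]_rk) : 'cV[C]_rk := map_mx intr x.
Definition toCm (g : 'M[int]_rk) : 'M[C]_rk := map_mx intr g.

Definition LformZ d (x y : 'cV[int]_rk) : int := (x^T *m gram d *m y) 0 0.
Definition LformQ d (x y : 'cV[rat]_rk) : rat :=
  (x^T *m map_mx intr (gram d) *m y) 0 0.
Definition LformC d (x y : 'cV[C]_rk) : C :=
  (x^T *m map_mx intr (gram d) *m y) 0 0.

(* Fixed positive definite 2-plane <p1,p2>, p1 = e1+f1, p2 = e2+f2, used to
   fix one of the two connected components (an orientation choice). *)
Definition p1 : 'cV[C]_rk := \col_(i < rk) (if (i < 2)%N then 1 else 0).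
Definition p2 : 'cV[C]_rk :=
  \col_(i < rk) (if (2 <= i < 4)%N then 1 else 0).

(* Affine cone D^bullet over D_{L_{2d}}:  nonzero Z with (Z,Z)=0,
   (Z, Zbar) > 0, and [Re Z, Im Z] positively oriented w.r.t. (p1,p2).
   ((Z,Z)=0 and (Z,Zbar)>0 already force Z != 0.) *)
Definition in_cone d (Z : 'cV[C]_rk) : Prop :=
  [/\ LformC d Z Z = 0,
      0 < LformC d Z (map_mx Num.conj Z)
    & 0 < 'Re (LformC d Z p1) * 'Im (LformC d Z p2)
          - 'Re (LformC d Z p2) * 'Im (LformC d Z p1)].

Definition in_dual d (v : 'cV[rat]_rk) : Prop :=
  forall w : 'cV[int]_rk, exists z : int, LformQ d v (toQ w) = z%:~R.

Definition acts_trivially_on_discr d (g : 'M[int]_rk) : Prop :=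
  forall v : 'cV[rat]_rk, in_dual d v ->
    exists u : 'cV[int]_rk, map_mx intr g *m v - v = toQ u.

(* tilde SO^+(L_{2d}) : integral isometries of determinant 1 preserving the
   component D (hence its cone), acting trivially on L^vee/L. *)
Definition in_SOtilde_plus d (g : 'M[int]_rk) : Prop :=
  [/\ g^T *m gram d *m g = gram d,
      \det g = 1,
      (forall Z : 'cV[C]_rk, in_cone d Z <-> in_cone d (toCm g *m Z))
    & acts_trivially_on_discr d g].

(* Separate holomorphy (complex partial derivatives in every coordinate) of
   G at every point of the polydisc of radius rho around Z0; by Hartogs'
   theorem this is holomorphy on that open polydisc.  Radii eps, delta, rho
   are elements of C with 0 < _, i.e. positive reals. *)
Definition near (rho : C) (Z0 Z : 'cV[C]_rk) : Prop :=
  forall i, `|Z i 0 - Z0 i 0| < rho.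

Definition coord_vec (i : 'I_rk) : 'cV[C]_rk := delta_mx i 0.

Definition holo_on_polydisc (G : 'cV[C]_rk -> C) (Z0 : 'cV[C]_rk) (rho : C) :=
  forall Z, near rho Z0 Z -> forall i : 'I_rk,
    exists c : C, forall eps : C, 0 < eps -> exists delta : C, 0 < delta /\
      forall h : C, h != 0 -> `|h| < delta ->
        `|(G (Z + h *: coord_vec i) - G Z) / h - c| < eps.

Definition holomorphic_on_cone d (F : 'cV[C]_rk -> C) : Prop :=
  forall Z0, in_cone d Z0 -> exists rho : C, 0 < rho /\
    exists G : 'cV[C]_rk -> C, holo_on_polydisc G Z0 rho /\
      forall Z, in_cone d Z -> near rho Z0 Z -> F Z = G Z.

Definition modular_form d (m : nat) (F : 'cV[C]_rk -> C) : Prop :=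
  [/\ holomorphic_on_cone d F,
      (forall (t : C) Z, t != 0 -> in_cone d Z -> F (t *: Z) = t ^- m * F Z)
    & (forall g Z, in_SOtilde_plus d g -> in_cone d Z ->
         F (toCm g *m Z) = F Z)].

Definition primitive (r : 'cV[int]_rk) : Prop :=
  forall (a : int) (v : 'cV[int]_rk), r = a *: v -> `|a| = 1.

Definition refl_mx d (r : 'cV[int]_rk) : 'M[rat]_rk :=
  1%:M - (2 / (LformZ d r r)%:~R) *: (toQ r *m (toQ r)^T *m map_mx intr (gram d)).

Definition in_OL d (M : 'M[rat]_rk) : Prop :=
  [/\ M^T *m map_mx intr (gram d) *m M = map_mx intr (gram d),
      (forall x : 'cV[int]_rk, exists y : 'cV[int]_rk, M *m toQ x = toQ y)
    & (forall y : 'cV[int]_rk, exists x : 'cV[int]_rk, M *m toQ x = toQ y)].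

(* Main.v *)
Require Import Defs.
From mathcomp Require Import all_boot all_order all_algebra.
From mathcomp Require Import complex Rstruct.
From mathcomp Require Import ring lra.
Set Implicit Arguments. Unset Strict Implicit. Unset Printing Implicit Defensive.
Import Order.TTheory GRing.Theory Num.Theory.
Local Open Scope ring_scope.

Definition bf (R : comNzRingType) d (x y : 'cV[R]_rk) : R :=
  (x^T *m map_mx intr (gram d) *m y) 0 0.
Definition cf (R : Type) (x : 'cV[R]_rk) (i : nat) : R := x (inord i) 0.
Definition cD (R : comNzRingType) d : R := (- ((2 * d)%N : int))%:~R.
Arguments cD {R} d.

Lemma sum21 (R : comNzRingType) (F : 'I_rk -> R) :
  \sum_(i < rk) F i = \sum_(0 <= i < rk) F (inord i).
Proof. by rewrite big_mkord; apply: eq_bigr => i _; rewrite inord_val. Qed.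

Lemma bf_sum (R : comNzRingType) d (x y : 'cV[R]_rk) :
  bf d x y = \sum_(j < rk) (\sum_(i < rk) x i 0 * (gramf d i j)%:~R) * y j 0.
Proof.
rewrite /bf !mxE; apply: eq_bigr => j _; rewrite !mxE.
by congr (_ * _); apply: eq_bigr => i _; rewrite !mxE.
Qed.

Lemma bf_sum2 (R : comNzRingType) d (x y : 'cV[R]_rk) :
  bf d x y = \sum_(i < rk) x i 0 * \sum_(j < rk) (gramf d i j)%:~R * y j 0.
Proof.
rewrite bf_sum; under eq_bigr do rewrite big_distrl /=.
rewrite exchange_big; apply: eq_bigr => i _; rewrite big_distrr /=.
by apply: eq_bigr => j _; rewrite mulrA.
Qed.

Definition ev (R : comNzRingType) (j : nat) : 'cV[R]_rk := delta_mx (inord j) 0.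
Arguments ev {R} j.

Lemma bf_ev (R : comNzRingType) d (x : 'cV[R]_rk) j : (j < rk)%N ->
  bf d x (ev j) = \sum_(i < rk) x i 0 * (gramf d i j)%:~R.
Proof.
move=> hj; rewrite bf_sum (bigD1 (inord j)) //= [X in _ + X]big1 ?addr0.
  rewrite /ev mxE !eqxx mulr1; apply: eq_bigr => i _; rewrite inordK //.
by move=> i hi; rewrite /ev mxE (negbTE hi) mulr0.
Qed.
Lemma grow0 (R : comNzRingType) d (y : 'cV[R]_rk) :
  \sum_(j < rk) (gramf d 0 j)%:~R * y j 0 = cf y 1.
Proof. rewrite sum21 /index_iota /= !big_cons big_nil !inordK // /gramf /= /cf; ring. Qed.
Lemma gcol0 (R : comNzRingType) d (x : 'cV[R]_rk) :
  \sum_(j < rk) x j 0 * (gramf d j 0)%:~R = cf x 1.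
Proof. rewrite sum21 /index_iota /= !big_cons big_nil !inordK // /gramf /= /cf; ring. Qed.

Lemma grow1 (R : comNzRingType) d (y : 'cV[R]_rk) :
  \sum_(j < rk) (gramf d 1 j)%:~R * y j 0 = cf y 0.
Proof. rewrite sum21 /index_iota /= !big_cons big_nil !inordK // /gramf /= /cf; ring. Qed.
Lemma gcol1 (R : comNzRingType) d (x : 'cV[R]_rk) :
  \sum_(j < rk) x j 0 * (gramf d j 1)%:~R = cf x 0.
Proof. rewrite sum21 /index_iota /= !big_cons big_nil !inordK // /gramf /= /cf; ring. Qed.

Lemma grow2 (R : comNzRingType) d (y : 'cV[R]_rk) :
  \sum_(j < rk) (gramf d 2 j)%:~R * y j 0 = cf y 3.
Proof. rewrite sum21 /index_iota /= !big_cons big_nil !inordK // /gramf /= /cf; ring. Qed.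
Lemma gcol2 (R : comNzRingType) d (x : 'cV[R]_rk) :
  \sum_(j < rk) x j 0 * (gramf d j 2)%:~R = cf x 3.
Proof. rewrite sum21 /index_iota /= !big_cons big_nil !inordK // /gramf /= /cf; ring. Qed.

Lemma grow3 (R : comNzRingType) d (y : 'cV[R]_rk) :
  \sum_(j < rk) (gramf d 3 j)%:~R * y j 0 = cf y 2.
Proof. rewrite sum21 /index_iota /= !big_cons big_nil !inordK // /gramf /= /cf; ring. Qed.
Lemma gcol3 (R : comNzRingType) d (x : 'cV[R]_rk) :
  \sum_(j < rk) x j 0 * (gramf d j 3)%:~R = cf x 2.
Proof. rewrite sum21 /index_iota /= !big_cons big_nil !inordK // /gramf /= /cf; ring. Qed.

Lemma grow4 (R : comNzRingType) d (y : 'cV[R]_rk) :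
  \sum_(j < rk) (gramf d 4 j)%:~R * y j 0 = (-2) * cf y 4 + cf y 5.
Proof. rewrite sum21 /index_iota /= !big_cons big_nil !inordK // /gramf /= /cf; ring. Qed.
Lemma gcol4 (R : comNzRingType) d (x : 'cV[R]_rk) :
  \sum_(j < rk) x j 0 * (gramf d j 4)%:~R = (-2) * cf x 4 + cf x 5.
Proof. rewrite sum21 /index_iota /= !big_cons big_nil !inordK // /gramf /= /cf; ring. Qed.

Lemma grow5 (R : comNzRingType) d (y : 'cV[R]_rk) :
  \sum_(j < rk) (gramf d 5 j)%:~R * y j 0 = cf y 4 + (-2) * cf y 5 + cf y 6.
Proof. rewrite sum21 /index_iota /= !big_cons big_nil !inordK // /gramf /= /cf; ring. Qed.
Lemma gcol5 (R : comNzRingType) d (x : 'cV[R]_rk) :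
  \sum_(j < rk) x j 0 * (gramf d j 5)%:~R = cf x 4 + (-2) * cf x 5 + cf x 6.
Proof. rewrite sum21 /index_iota /= !big_cons big_nil !inordK // /gramf /= /cf; ring. Qed.

Lemma grow6 (R : comNzRingType) d (y : 'cV[R]_rk) :
  \sum_(j < rk) (gramf d 6 j)%:~R * y j 0 = cf y 5 + (-2) * cf y 6 + cf y 7.
Proof. rewrite sum21 /index_iota /= !big_cons big_nil !inordK // /gramf /= /cf; ring. Qed.
Lemma gcol6 (R : comNzRingType) d (x : 'cV[R]_rk) :
  \sum_(j < rk) x j 0 * (gramf d j 6)%:~R = cf x 5 + (-2) * cf x 6 + cf x 7.
Proof. rewrite sum21 /index_iota /= !big_cons big_nil !inordK // /gramf /= /cf; ring. Qed.

Lemma grow7 (R : comNzRingType) d (y : 'cV[R]_rk) :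
  \sum_(j < rk) (gramf d 7 j)%:~R * y j 0 = cf y 6 + (-2) * cf y 7 + cf y 8.
Proof. rewrite sum21 /index_iota /= !big_cons big_nil !inordK // /gramf /= /cf; ring. Qed.
Lemma gcol7 (R : comNzRingType) d (x : 'cV[R]_rk) :
  \sum_(j < rk) x j 0 * (gramf d j 7)%:~R = cf x 6 + (-2) * cf x 7 + cf x 8.
Proof. rewrite sum21 /index_iota /= !big_cons big_nil !inordK // /gramf /= /cf; ring. Qed.

Lemma grow8 (R : comNzRingType) d (y : 'cV[R]_rk) :
  \sum_(j < rk) (gramf d 8 j)%:~R * y j 0 = cf y 7 + (-2) * cf y 8 + cf y 9 + cf y 11.
Proof. rewrite sum21 /index_iota /= !big_cons big_nil !inordK // /gramf /= /cf; ring. Qed.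
Lemma gcol8 (R : comNzRingType) d (x : 'cV[R]_rk) :
  \sum_(j < rk) x j 0 * (gramf d j 8)%:~R = cf x 7 + (-2) * cf x 8 + cf x 9 + cf x 11.
Proof. rewrite sum21 /index_iota /= !big_cons big_nil !inordK // /gramf /= /cf; ring. Qed.

Lemma grow9 (R : comNzRingType) d (y : 'cV[R]_rk) :
  \sum_(j < rk) (gramf d 9 j)%:~R * y j 0 = cf y 8 + (-2) * cf y 9 + cf y 10.
Proof. rewrite sum21 /index_iota /= !big_cons big_nil !inordK // /gramf /= /cf; ring. Qed.
Lemma gcol9 (R : comNzRingType) d (x : 'cV[R]_rk) :
  \sum_(j < rk) x j 0 * (gramf d j 9)%:~R = cf x 8 + (-2) * cf x 9 + cf x 10.
Proof. rewrite sum21 /index_iota /= !big_cons big_nil !inordK // /gramf /= /cf; ring. Qed.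

Lemma grow10 (R : comNzRingType) d (y : 'cV[R]_rk) :
  \sum_(j < rk) (gramf d 10 j)%:~R * y j 0 = cf y 9 + (-2) * cf y 10.
Proof. rewrite sum21 /index_iota /= !big_cons big_nil !inordK // /gramf /= /cf; ring. Qed.
Lemma gcol10 (R : comNzRingType) d (x : 'cV[R]_rk) :
  \sum_(j < rk) x j 0 * (gramf d j 10)%:~R = cf x 9 + (-2) * cf x 10.
Proof. rewrite sum21 /index_iota /= !big_cons big_nil !inordK // /gramf /= /cf; ring. Qed.

Lemma grow11 (R : comNzRingType) d (y : 'cV[R]_rk) :
  \sum_(j < rk) (gramf d 11 j)%:~R * y j 0 = cf y 8 + (-2) * cf y 11.
Proof. rewrite sum21 /index_iota /= !big_cons big_nil !inordK // /gramf /= /cf; ring. Qed.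
Lemma gcol11 (R : comNzRingType) d (x : 'cV[R]_rk) :
  \sum_(j < rk) x j 0 * (gramf d j 11)%:~R = cf x 8 + (-2) * cf x 11.
Proof. rewrite sum21 /index_iota /= !big_cons big_nil !inordK // /gramf /= /cf; ring. Qed.

Lemma grow12 (R : comNzRingType) d (y : 'cV[R]_rk) :
  \sum_(j < rk) (gramf d 12 j)%:~R * y j 0 = (-2) * cf y 12 + cf y 13.
Proof. rewrite sum21 /index_iota /= !big_cons big_nil !inordK // /gramf /= /cf; ring. Qed.
Lemma gcol12 (R : comNzRingType) d (x : 'cV[R]_rk) :
  \sum_(j < rk) x j 0 * (gramf d j 12)%:~R = (-2) * cf x 12 + cf x 13.
Proof. rewrite sum21 /index_iota /= !big_cons big_nil !inordK // /gramf /= /cf; ring. Qed.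

Lemma grow13 (R : comNzRingType) d (y : 'cV[R]_rk) :
  \sum_(j < rk) (gramf d 13 j)%:~R * y j 0 = cf y 12 + (-2) * cf y 13 + cf y 14.
Proof. rewrite sum21 /index_iota /= !big_cons big_nil !inordK // /gramf /= /cf; ring. Qed.
Lemma gcol13 (R : comNzRingType) d (x : 'cV[R]_rk) :
  \sum_(j < rk) x j 0 * (gramf d j 13)%:~R = cf x 12 + (-2) * cf x 13 + cf x 14.
Proof. rewrite sum21 /index_iota /= !big_cons big_nil !inordK // /gramf /= /cf; ring. Qed.

Lemma grow14 (R : comNzRingType) d (y : 'cV[R]_rk) :
  \sum_(j < rk) (gramf d 14 j)%:~R * y j 0 = cf y 13 + (-2) * cf y 14 + cf y 15.
Proof. rewrite sum21 /index_iota /= !big_cons big_nil !inordK // /gramf /= /cf; ring. Qed.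
Lemma gcol14 (R : comNzRingType) d (x : 'cV[R]_rk) :
  \sum_(j < rk) x j 0 * (gramf d j 14)%:~R = cf x 13 + (-2) * cf x 14 + cf x 15.
Proof. rewrite sum21 /index_iota /= !big_cons big_nil !inordK // /gramf /= /cf; ring. Qed.

Lemma grow15 (R : comNzRingType) d (y : 'cV[R]_rk) :
  \sum_(j < rk) (gramf d 15 j)%:~R * y j 0 = cf y 14 + (-2) * cf y 15 + cf y 16.
Proof. rewrite sum21 /index_iota /= !big_cons big_nil !inordK // /gramf /= /cf; ring. Qed.
Lemma gcol15 (R : comNzRingType) d (x : 'cV[R]_rk) :
  \sum_(j < rk) x j 0 * (gramf d j 15)%:~R = cf x 14 + (-2) * cf x 15 + cf x 16.
Proof. rewrite sum21 /index_iota /= !big_cons big_nil !inordK // /gramf /= /cf; ring. Qed.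

Lemma grow16 (R : comNzRingType) d (y : 'cV[R]_rk) :
  \sum_(j < rk) (gramf d 16 j)%:~R * y j 0 = cf y 15 + (-2) * cf y 16 + cf y 17 + cf y 19.
Proof. rewrite sum21 /index_iota /= !big_cons big_nil !inordK // /gramf /= /cf; ring. Qed.
Lemma gcol16 (R : comNzRingType) d (x : 'cV[R]_rk) :
  \sum_(j < rk) x j 0 * (gramf d j 16)%:~R = cf x 15 + (-2) * cf x 16 + cf x 17 + cf x 19.
Proof. rewrite sum21 /index_iota /= !big_cons big_nil !inordK // /gramf /= /cf; ring. Qed.

Lemma grow17 (R : comNzRingType) d (y : 'cV[R]_rk) :
  \sum_(j < rk) (gramf d 17 j)%:~R * y j 0 = cf y 16 + (-2) * cf y 17 + cf y 18.
Proof. rewrite sum21 /index_iota /= !big_cons big_nil !inordK // /gramf /= /cf; ring. Qed.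
Lemma gcol17 (R : comNzRingType) d (x : 'cV[R]_rk) :
  \sum_(j < rk) x j 0 * (gramf d j 17)%:~R = cf x 16 + (-2) * cf x 17 + cf x 18.
Proof. rewrite sum21 /index_iota /= !big_cons big_nil !inordK // /gramf /= /cf; ring. Qed.

Lemma grow18 (R : comNzRingType) d (y : 'cV[R]_rk) :
  \sum_(j < rk) (gramf d 18 j)%:~R * y j 0 = cf y 17 + (-2) * cf y 18.
Proof. rewrite sum21 /index_iota /= !big_cons big_nil !inordK // /gramf /= /cf; ring. Qed.
Lemma gcol18 (R : comNzRingType) d (x : 'cV[R]_rk) :
  \sum_(j < rk) x j 0 * (gramf d j 18)%:~R = cf x 17 + (-2) * cf x 18.
Proof. rewrite sum21 /index_iota /= !big_cons big_nil !inordK // /gramf /= /cf; ring. Qed.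

Lemma grow19 (R : comNzRingType) d (y : 'cV[R]_rk) :
  \sum_(j < rk) (gramf d 19 j)%:~R * y j 0 = cf y 16 + (-2) * cf y 19.
Proof. rewrite sum21 /index_iota /= !big_cons big_nil !inordK // /gramf /= /cf; ring. Qed.
Lemma gcol19 (R : comNzRingType) d (x : 'cV[R]_rk) :
  \sum_(j < rk) x j 0 * (gramf d j 19)%:~R = cf x 16 + (-2) * cf x 19.
Proof. rewrite sum21 /index_iota /= !big_cons big_nil !inordK // /gramf /= /cf; ring. Qed.

Lemma grow20 (R : comNzRingType) d (y : 'cV[R]_rk) :
  \sum_(j < rk) (gramf d 20 j)%:~R * y j 0 = cD d * cf y 20.
Proof. rewrite sum21 /index_iota /= !big_cons big_nil !inordK // /gramf /= /cf; ring. Qed.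
Lemma gcol20 (R : comNzRingType) d (x : 'cV[R]_rk) :
  \sum_(j < rk) x j 0 * (gramf d j 20)%:~R = cD d * cf x 20.
Proof. rewrite sum21 /index_iota /= !big_cons big_nil !inordK // /gramf /= /cf; ring. Qed.

Definition bfF (R : comNzRingType) d (x y : 'cV[R]_rk) : R :=
  cf x 0 * (cf y 1) + cf x 1 * (cf y 0) + cf x 2 * (cf y 3) + cf x 3 * (cf y 2) + cf x 4 * ((-2) * cf y 4 + cf y 5) + cf x 5 * (cf y 4 + (-2) * cf y 5 + cf y 6) + cf x 6 * (cf y 5 + (-2) * cf y 6 + cf y 7) + cf x 7 * (cf y 6 + (-2) * cf y 7 + cf y 8) + cf x 8 * (cf y 7 + (-2) * cf y 8 + cf y 9 + cf y 11) + cf x 9 * (cf y 8 + (-2) * cf y 9 + cf y 10) + cf x 10 * (cf y 9 + (-2) * cf y 10) + cf x 11 * (cf y 8 + (-2) * cf y 11) + cf x 12 * ((-2) * cf y 12 + cf y 13) + cf x 13 * (cf y 12 + (-2) * cf y 13 + cf y 14) + cf x 14 * (cf y 13 + (-2) * cf y 14 + cf y 15) + cf x 15 * (cf y 14 + (-2) * cf y 15 + cf y 16) + cf x 16 * (cf y 15 + (-2) * cf y 16 + cf y 17 + cf y 19) + cf x 17 * (cf y 16 + (-2) * cf y 17 + cf y 18) + cf x 18 * (cf y 17 + (-2) * cf y 18) + cf x 19 * (cf y 16 + (-2) * cf y 19) + cf x 20 * (cD d * cf y 20).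
Lemma bfE (R : comNzRingType) d (x y : 'cV[R]_rk) : bf d x y = bfF d x y.
Proof.
rewrite bf_sum2 sum21 /index_iota /= !big_cons big_nil.
rewrite !inordK //.
rewrite grow0 grow1 grow2 grow3 grow4 grow5 grow6 grow7 grow8 grow9 grow10 grow11 grow12 grow13 grow14 grow15 grow16 grow17 grow18 grow19 grow20.

by rewrite addr0 /bfF /cf !addrA.
Qed.


Lemma bfDl (R : comNzRingType) (d : nat) (x : 'cV[R]_rk) (y : 'cV[R]_rk) (z : 'cV[R]_rk):  bf d (x + y) z = bf d x z + bf d y z.
Proof. by rewrite /bf linearD /= !mulmxDl mxE. Qed.
Lemma bfDr (R : comNzRingType) (d : nat) (x : 'cV[R]_rk) (y : 'cV[R]_rk) (z : 'cV[R]_rk):  bf d x (y + z) = bf d x y + bf d x z.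
Proof. by rewrite /bf !mulmxDr mxE. Qed.
Lemma bfZl (R : comNzRingType) (d : nat) (a : R) (x : 'cV[R]_rk) (y : 'cV[R]_rk):  bf d (a *: x) y = a * bf d x y.
Proof. by rewrite /bf linearZ /= -!scalemxAl mxE. Qed.
Lemma bfZr (R : comNzRingType) (d : nat) (a : R) (x : 'cV[R]_rk) (y : 'cV[R]_rk):  bf d x (a *: y) = a * bf d x y.
Proof. by rewrite /bf -!scalemxAr mxE. Qed.
Lemma bfNl (R : comNzRingType) (d : nat) (x : 'cV[R]_rk) (y : 'cV[R]_rk):  bf d (- x) y = - bf d x y.
Proof. by rewrite -scaleN1r bfZl mulN1r. Qed.
Lemma bfNr (R : comNzRingType) (d : nat) (x : 'cV[R]_rk) (y : 'cV[R]_rk):  bf d x (- y) = - bf d x y.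
Proof. by rewrite -scaleN1r bfZr mulN1r. Qed.
Lemma bfBl (R : comNzRingType) (d : nat) (x : 'cV[R]_rk) (y : 'cV[R]_rk) (z : 'cV[R]_rk):  bf d (x - y) z = bf d x z - bf d y z.
Proof. by rewrite bfDl bfNl. Qed.
Lemma bfBr (R : comNzRingType) (d : nat) (x : 'cV[R]_rk) (y : 'cV[R]_rk) (z : 'cV[R]_rk):  bf d x (y - z) = bf d x y - bf d x z.
Proof. by rewrite bfDr bfNr. Qed.
Lemma bfC (R : comNzRingType) (d : nat) (x : 'cV[R]_rk) (y : 'cV[R]_rk):  bf d x y = bf d y x.
Proof. by rewrite !bfE /bfF; ring. Qed.

Lemma bf_iso (R : comNzRingType) (d : nat) (g : 'M[R]_rk) (x y : 'cV[R]_rk) :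
  g^T *m map_mx intr (gram d) *m g = map_mx intr (gram d) ->
  bf d (g *m x) (g *m y) = bf d x y.
Proof.
move=> H; rewrite /bf trmx_mul.
transitivity ((x^T *m (g^T *m map_mx intr (gram d) *m g) *m y) 0 0).
  by rewrite !mulmxA.
by rewrite H.
Qed.

Lemma bf_map (R S : comNzRingType) (f : {rmorphism R -> S}) d (x y : 'cV[R]_rk) :
  bf d (map_mx f x) (map_mx f y) = f (bf d x y).
Proof.
rewrite /bf.
have -> : map_mx intr (gram d) = map_mx f (map_mx intr (gram d)).
  by apply/matrixP => i j; rewrite !mxE rmorph_int.
by rewrite map_trmx -!map_mxM mxE.
Qed.

Lemma det_rank1 (R : comNzRingType) n (u : 'cV[R]_n) (w : 'rV[R]_n) :
  \det (1%:M - u *m w) = 1 - (w *m u) 0 0.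
Proof.
pose A : 'M[R]_(n + 1) := block_mx 1%:M u w 1%:M.
pose L : 'M[R]_(n + 1) := block_mx 1%:M 0 (- w) 1%:M.
have E1 : A *m L = block_mx (1%:M - u *m w) u 0 1%:M.
  rewrite mulmx_block !mul1mx !mulmx1 !mulmx0 !mulmxN ?addr0 ?add0r ?addrN.
  by congr block_mx; rewrite ?addr0 ?add0r ?addrN.
have E2 : L *m A = block_mx 1%:M u 0 (1%:M - w *m u).
  rewrite mulmx_block !mul1mx !mulmx1 !mul0mx !mulNmx ?add0r ?addr0 ?addNr.
  by congr block_mx; rewrite ?addr0 ?add0r ?addNr // addrC.
have dL : \det L = 1 by rewrite det_lblock !det1 mulr1.
have := congr1 determinant E1; rewrite det_mulmx dL mulr1 det_ublock det1 mulr1.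
move=> <-.
have := congr1 determinant E2; rewrite det_mulmx dL mul1r det_ublock det1 mul1r.
by move=> ->; rewrite det_mx11 !mxE.
Qed.

Definition pv1 (R : comNzRingType) : 'cV[R]_rk :=
  \col_(i < rk) (if (i < 2)%N then 1 else 0).
Definition pv2 (R : comNzRingType) : 'cV[R]_rk :=
  \col_(i < rk) (if (2 <= i < 4)%N then 1 else 0).
Arguments pv1 {R}.
Arguments pv2 {R}.

Lemma bf_pv1 (R : comNzRingType) d (u : 'cV[R]_rk) : bf d u pv1 = cf u 0 + cf u 1.
Proof. rewrite bfE /bfF /pv1 /cf !mxE !inordK //=; ring. Qed.
Lemma bf_pv2 (R : comNzRingType) d (u : 'cV[R]_rk) : bf d u pv2 = cf u 2 + cf u 3.
Proof. rewrite bfE /bfF /pv2 /cf !mxE !inordK //=; ring. Qed.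

Lemma cD_le0 (K : realFieldType) d : cD d <= 0 :> K.
Proof. by rewrite /cD mulrNz oppr_le0 ler0z. Qed.

Lemma lemmaA (K : realFieldType) d (u : 'cV[K]_rk) :
  bf d u pv1 = 0 -> bf d u pv2 = 0 -> bf d u u <= 0.
Proof.
rewrite bf_pv1 bf_pv2 bfE /bfF => h1 h2.
have e1 : cf u 1 = - cf u 0 by apply/eqP; rewrite -addr_eq0 addrC h1.
have e3 : cf u 3 = - cf u 2 by apply/eqP; rewrite -addr_eq0 addrC h2.
rewrite e1 e3.
have hD := cD_le0 K d.
have q20 : 0 <= cf u 20 ^+ 2 := sqr_ge0 _.
have hd20 : cD d * cf u 20 ^+ 2 <= 0 by rewrite mulr_le0_ge0.
move: hd20; rewrite expr2.
have s0 : 0 <= (1%:R * cf u 4 + (- (1%:R / 2%:R)) * cf u 5) ^+ 2 := sqr_ge0 _.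
have s1 : 0 <= (1%:R * cf u 5 + (- (2%:R / 3%:R)) * cf u 6) ^+ 2 := sqr_ge0 _.
have s2 : 0 <= (1%:R * cf u 6 + (- (3%:R / 4%:R)) * cf u 7) ^+ 2 := sqr_ge0 _.
have s3 : 0 <= (1%:R * cf u 7 + (- (4%:R / 5%:R)) * cf u 8) ^+ 2 := sqr_ge0 _.
have s4 : 0 <= (1%:R * cf u 8 + (- (5%:R / 6%:R)) * cf u 9 + (- (5%:R / 6%:R)) * cf u 11) ^+ 2 := sqr_ge0 _.
have s5 : 0 <= (1%:R * cf u 9 + (- (6%:R / 7%:R)) * cf u 10 + (- (5%:R / 7%:R)) * cf u 11) ^+ 2 := sqr_ge0 _.
have s6 : 0 <= (1%:R * cf u 10 + (- (5%:R / 8%:R)) * cf u 11) ^+ 2 := sqr_ge0 _.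
have s7 : 0 <= (1%:R * cf u 11) ^+ 2 := sqr_ge0 _.
have s8 : 0 <= (1%:R * cf u 12 + (- (1%:R / 2%:R)) * cf u 13) ^+ 2 := sqr_ge0 _.
have s9 : 0 <= (1%:R * cf u 13 + (- (2%:R / 3%:R)) * cf u 14) ^+ 2 := sqr_ge0 _.
have s10 : 0 <= (1%:R * cf u 14 + (- (3%:R / 4%:R)) * cf u 15) ^+ 2 := sqr_ge0 _.
have s11 : 0 <= (1%:R * cf u 15 + (- (4%:R / 5%:R)) * cf u 16) ^+ 2 := sqr_ge0 _.
have s12 : 0 <= (1%:R * cf u 16 + (- (5%:R / 6%:R)) * cf u 17 + (- (5%:R / 6%:R)) * cf u 19) ^+ 2 := sqr_ge0 _.
have s13 : 0 <= (1%:R * cf u 17 + (- (6%:R / 7%:R)) * cf u 18 + (- (5%:R / 7%:R)) * cf u 19) ^+ 2 := sqr_ge0 _.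
have s14 : 0 <= (1%:R * cf u 18 + (- (5%:R / 8%:R)) * cf u 19) ^+ 2 := sqr_ge0 _.
have s15 : 0 <= (1%:R * cf u 19) ^+ 2 := sqr_ge0 _.
have s16 : 0 <= cf u 0 ^+ 2 := sqr_ge0 _.
have s17 : 0 <= cf u 2 ^+ 2 := sqr_ge0 _.
move=> hd20.
move: s0 s1 s2 s3 s4 s5 s6 s7 s8 s9 s10 s11 s12 s13 s14 s15 s16 s17 hd20.
rewrite !expr2.
move: (cf u 0) (cf u 2) (cf u 4) (cf u 5) (cf u 6) (cf u 7) (cf u 8) (cf u 9) (cf u 10) (cf u 11) (cf u 12) (cf u 13) (cf u 14) (cf u 15) (cf u 16) (cf u 17) (cf u 18) (cf u 19) (cf u 20) (cD d : K) => *.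
lra.
Qed.

Definition Ori (R : comNzRingType) d (u v : 'cV[R]_rk) : R :=
  bf d u pv1 * bf d v pv2 - bf d u pv2 * bf d v pv1.

Definition st (K : numFieldType) d (r : 'cV[K]_rk) (t : K) (v : 'cV[K]_rk) :=
  v - (t * (2 * bf d v r / bf d r r)) *: r.

Lemma affine_sign (K : realFieldType) (f0 f1 : K) :
  (forall t, 0 <= t -> t <= 1 -> f0 + t * (f1 - f0) != 0) -> (0 < f0) = (0 < f1).
Proof.
move=> H.
have key : forall a b : K, (0 < a /\ b <= 0) \/ (a <= 0 /\ 0 < b) ->
    exists t, [/\ 0 <= t, t <= 1 & a + t * (b - a) = 0].
  move=> a b hab; have hne : a - b != 0.
    by apply/negP => /eqP; move: hab => [[? ?]|[? ?]] h; lra.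
  exists (a / (a - b)); split.
  - case: hab => [[ha hb]|[ha hb]].
      by apply: divr_ge0; lra.
    by rewrite -mulrNN -invrN; apply: divr_ge0; lra.
  - case: hab => [[ha hb]|[ha hb]].
      by rewrite ler_pdivrMr ?mul1r; lra.
    by rewrite -mulrNN -invrN ler_pdivrMr ?mul1r; lra.
  - by field.
apply/idP/idP => h.
  rewrite ltNge; apply/negP => h1.
  have [t [t0 t1 ht]] := key f0 f1 (or_introl (conj h h1)).
  by move: (H t t0 t1); rewrite ht eqxx.
rewrite ltNge; apply/negP => h1.
have [t [t0 t1 ht]] := key f0 f1 (or_intror (conj h1 h)).
by move: (H t t0 t1); rewrite ht eqxx.
Qed.

Lemma bf_st_l (K : numFieldType) d r t (v w : 'cV[K]_rk) :
  bf d (st d r t v) w = bf d v w - (t * (2 * bf d v r / bf d r r)) * bf d r w.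
Proof. by rewrite /st bfBl bfZl. Qed.

Lemma noZero (K : realFieldType) d (r A B : 'cV[K]_rk) t :
  bf d r r < 0 -> bf d A A = bf d B B -> bf d A B = 0 -> 0 < bf d A A ->
  0 <= t -> t <= 1 -> Ori d (st d r t A) (st d r t B) != 0.
Proof.
move=> hN hAB hAB0 hA ht0 ht1; apply/negP => /eqP hO.
set A' := st d r t A; set B' := st d r t B.
have [al [be [hne [h1 h2]]]] : exists al be : K, [/\ al != 0 \/ be != 0,
    al * bf d A' pv1 + be * bf d B' pv1 = 0 &
    al * bf d A' pv2 + be * bf d B' pv2 = 0].
  move: hO; rewrite /Ori.
  set a := bf d A' pv1; set b := bf d B' pv1; set c := bf d A' pv2; set e := bf d B' pv2.
  move=> hO.
  case: (eqVneq a 0) => ha; case: (eqVneq b 0) => hb.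
  - case: (eqVneq c 0) => hc; case: (eqVneq e 0) => he.
    + exists 1, 0; split; first by left; exact: oner_neq0.
        by rewrite ha hb; ring.
      by rewrite hc he; ring.
    + exists e, (- c); split; first by left.
        by rewrite ha hb; ring.
      by ring.
    + exists e, (- c); split; first by right; rewrite oppr_eq0.
        by rewrite ha hb; ring.
      by ring.
    + exists e, (- c); split; first by left.
        by rewrite ha hb; ring.
      by ring.
  - exists b, (- a); split; first by left.
      by ring.
    by transitivity (- (a * e - c * b)); [ring | rewrite hO oppr0].
  - exists b, (- a); split; first by right; rewrite oppr_eq0.
      by ring.
    by transitivity (- (a * e - c * b)); [ring | rewrite hO oppr0].
  - exists b, (- a); split; first by left.
      by ring.
    by transitivity (- (a * e - c * b)); [ring | rewrite hO oppr0].
pose u := al *: A' + be *: B'.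
have hu1 : bf d u pv1 = 0 by rewrite /u bfDl !bfZl.
have hu2 : bf d u pv2 = 0 by rewrite /u bfDl !bfZl.
have := lemmaA hu1 hu2.
rewrite /u /A' /B' /st !bfDl !bfDr !bfZl !bfZr !bfBl !bfBr !bfZl !bfZr.
rewrite (bfC d r A) (bfC d r B) (bfC d B A) hAB0 -hAB.
set N := bf d r r; set aa := bf d A A; set ar := bf d A r; set br := bf d B r.
have hN0 : N != 0 by rewrite lt_eqF.
pose T := (al ^+ 2 + be ^+ 2) * aa + ((- N) * (t * (1 - t))) * (al * (2 * ar / N) + be * (2 * br / N)) ^+ 2.
suff key : forall X, X = T -> X <= 0 -> False.
  by apply: key; rewrite /T; field.
move=> X -> {X}; rewrite /T.
have p1 : 0 < al ^+ 2 + be ^+ 2.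
  have q1 : 0 <= al ^+ 2 := sqr_ge0 _.
  have q2 : 0 <= be ^+ 2 := sqr_ge0 _.
  case: hne => h.
    have : 0 < al ^+ 2 by rewrite lt_def q1 expf_neq0.
    lra.
  have : 0 < be ^+ 2 by rewrite lt_def q2 expf_neq0.
  lra.
have p2 : 0 < (al ^+ 2 + be ^+ 2) * aa by apply: mulr_gt0.
have p3 : 0 <= ((- N) * (t * (1 - t))) * (al * (2 * ar / N) + be * (2 * br / N)) ^+ 2.
  apply: mulr_ge0; last exact: sqr_ge0.
  apply: mulr_ge0; first by rewrite oppr_ge0 ltW.
  apply: mulr_ge0; lra.
lra.
Qed.

Lemma ori_core (K : realFieldType) d (r A B : 'cV[K]_rk) :
  bf d r r < 0 -> bf d A A = bf d B B -> bf d A B = 0 -> 0 < bf d A A ->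
  (0 < Ori d A B) = (0 < Ori d (st d r 1 A) (st d r 1 B)).
Proof.
move=> hN hAB hAB0 hA.
have aff : forall t, Ori d (st d r t A) (st d r t B) =
    Ori d A B + t * (Ori d (st d r 1 A) (st d r 1 B) - Ori d A B).
  by move=> t; rewrite /Ori !bf_st_l; ring.
apply: affine_sign => t t0 t1; rewrite -aff; exact: noZero.
Qed.

Definition toK (K : numFieldType) (x : 'cV[int]_rk) : 'cV[K]_rk := map_mx intr x.
Arguments toK {K} x.

Lemma LformZ_bf d x y : LformZ d x y = bf d x y.
Proof.
rewrite /LformZ /bf; congr ((_ *m _ *m _) 0 0).
by apply/matrixP => i j; rewrite !mxE intz.
Qed.

Lemma bf_toK (K : numFieldType) d x y :
  bf d (toK x) (toK y) = (LformZ d x y)%:~R :> K.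
Proof. by rewrite /toK (bf_map (intr : {rmorphism int -> K})) LformZ_bf. Qed.

Lemma refl_act (K : numFieldType) d r (v : 'cV[K]_rk) :
  map_mx ratr (refl_mx d r) *m v =
  v - ((2 / (LformZ d r r)%:~R) * bf d (toK r) v) *: toK r.
Proof.
rewrite /refl_mx map_mxB map_mx1 map_mxZ !map_mxM /=.
have -> : map_mx ratr (toQ r)^T = (toK r)^T :> 'rV[K]_rk.
  by apply/matrixP => i j; rewrite !mxE ratr_int.
have -> : map_mx ratr (toQ r) = toK r :> 'cV[K]_rk.
  by apply/matrixP => i j; rewrite !mxE ratr_int.
have -> : map_mx ratr (map_mx intr (gram d)) = map_mx intr (gram d) :> 'M[K]_rk.
  by apply/matrixP => i j; rewrite !mxE ratr_int.
rewrite mulmxBl mul1mx -scalemxAl; congr (_ - _).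
rewrite fmorph_div rmorph_nat rmorph_int -!mulmxA.
rewrite [(toK r)^T *m _]mx11_scalar mul_mx_scalar scalerA; congr (_ *: _).
by rewrite /bf mulmxA.
Qed.

Definition gM d r : 'M[int]_rk := map_mx numq (- refl_mx d r).

Lemma refl_int d r (i j : 'I_rk) : in_OL d (refl_mx d r) ->
  exists z : int, refl_mx d r i j = z%:~R.
Proof.
case=> _ hx _; have [y hy] := hx (delta_mx j 0).
exists (y i 0).
have : (refl_mx d r *m toQ (delta_mx j 0)) i 0 = (toQ y) i 0 by rewrite hy.
have -> : toQ (delta_mx j 0) = delta_mx j 0.
  by apply/matrixP => a b; rewrite !mxE; case: (_ && _).
by rewrite -colE !mxE.
Qed.

Lemma gQ d r : in_OL d (refl_mx d r) ->
  map_mx intr (gM d r) = - refl_mx d r.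
Proof.
move=> hOL; apply/matrixP => i j.
have [z hz] := refl_int i j hOL.
rewrite /gM; move: (refl_mx d r) hz => s hz.
rewrite !mxE hz.
have -> : - (z%:~R : rat) = (- z)%:~R by rewrite rmorphN.
by rewrite numq_int.
Qed.

Lemma gK (K : numFieldType) d r : in_OL d (refl_mx d r) ->
  map_mx intr (gM d r) = - map_mx ratr (refl_mx d r) :> 'M[K]_rk.
Proof.
move=> hOL; rewrite -map_mxN -gQ //.
by apply/matrixP => i j; rewrite !mxE; symmetry; exact: ratr_int.
Qed.

Lemma g_act (K : numFieldType) d r (v : 'cV[K]_rk) :
  in_OL d (refl_mx d r) -> LformZ d r r != 0 ->
  map_mx intr (gM d r) *m v = - st d (toK r) 1 v.
Proof.
move=> hOL hN; rewrite gK // mulNmx refl_act /st; congr (- (_ - _ *: _)).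
rewrite bf_toK (bfC d (toK r) v) mul1r; field.
by rewrite intr_eq0.
Qed.

Lemma intmx_inj m n (A B : 'M[int]_(m, n)) :
  map_mx (intr : int -> rat) A = map_mx intr B -> A = B.
Proof.
move=> h; apply/matrixP => i j; move/matrixP/(_ i j): h; rewrite !mxE.
exact: intr_inj.
Qed.

Lemma g_iso d r : in_OL d (refl_mx d r) ->
  (gM d r)^T *m gram d *m gM d r = gram d.
Proof.
move=> hOL; apply: intmx_inj.
rewrite !map_mxM -map_trmx gQ //.
have -> : (- refl_mx d r)^T = - (refl_mx d r)^T by apply/matrixP => i j; rewrite !mxE.
rewrite !mulNmx !mulmxN ?opprK.
by case: hOL.
Qed.

Lemma g_det d r : in_OL d (refl_mx d r) -> LformZ d r r != 0 ->
  \det (gM d r) = 1.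
Proof.
move=> hOL hN; apply: (@intr_inj rat).
rewrite -det_map_mx gQ // -scaleN1r detZ.
rewrite /refl_mx -mulmxA scalemxAl det_rank1.
rewrite -scalemxAr mxE.
have -> : ((toQ r)^T *m map_mx intr (gram d) *m toQ r) 0 0 = (LformZ d r r)%:~R
  := bf_toK rat d r r.
rewrite divfK ?intr_eq0 // /rk; ring.
Qed.

Lemma bfe0 (R : comNzRingType) d (x : 'cV[R]_rk) :
  bf d x (ev 0) = cf x 1.
Proof. by rewrite bf_ev // gcol0. Qed.
Lemma bfe1 (R : comNzRingType) d (x : 'cV[R]_rk) :
  bf d x (ev 1) = cf x 0.
Proof. by rewrite bf_ev // gcol1. Qed.
Lemma bfe2 (R : comNzRingType) d (x : 'cV[R]_rk) :
  bf d x (ev 2) = cf x 3.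
Proof. by rewrite bf_ev // gcol2. Qed.
Lemma bfe3 (R : comNzRingType) d (x : 'cV[R]_rk) :
  bf d x (ev 3) = cf x 2.
Proof. by rewrite bf_ev // gcol3. Qed.
Lemma bfe4 (R : comNzRingType) d (x : 'cV[R]_rk) :
  bf d x (ev 4) = (-2) * cf x 4 + cf x 5.
Proof. by rewrite bf_ev // gcol4. Qed.
Lemma bfe5 (R : comNzRingType) d (x : 'cV[R]_rk) :
  bf d x (ev 5) = cf x 4 + (-2) * cf x 5 + cf x 6.
Proof. by rewrite bf_ev // gcol5. Qed.
Lemma bfe6 (R : comNzRingType) d (x : 'cV[R]_rk) :
  bf d x (ev 6) = cf x 5 + (-2) * cf x 6 + cf x 7.
Proof. by rewrite bf_ev // gcol6. Qed.
Lemma bfe7 (R : comNzRingType) d (x : 'cV[R]_rk) :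
  bf d x (ev 7) = cf x 6 + (-2) * cf x 7 + cf x 8.
Proof. by rewrite bf_ev // gcol7. Qed.
Lemma bfe8 (R : comNzRingType) d (x : 'cV[R]_rk) :
  bf d x (ev 8) = cf x 7 + (-2) * cf x 8 + cf x 9 + cf x 11.
Proof. by rewrite bf_ev // gcol8. Qed.
Lemma bfe9 (R : comNzRingType) d (x : 'cV[R]_rk) :
  bf d x (ev 9) = cf x 8 + (-2) * cf x 9 + cf x 10.
Proof. by rewrite bf_ev // gcol9. Qed.
Lemma bfe10 (R : comNzRingType) d (x : 'cV[R]_rk) :
  bf d x (ev 10) = cf x 9 + (-2) * cf x 10.
Proof. by rewrite bf_ev // gcol10. Qed.
Lemma bfe11 (R : comNzRingType) d (x : 'cV[R]_rk) :
  bf d x (ev 11) = cf x 8 + (-2) * cf x 11.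
Proof. by rewrite bf_ev // gcol11. Qed.
Lemma bfe12 (R : comNzRingType) d (x : 'cV[R]_rk) :
  bf d x (ev 12) = (-2) * cf x 12 + cf x 13.
Proof. by rewrite bf_ev // gcol12. Qed.
Lemma bfe13 (R : comNzRingType) d (x : 'cV[R]_rk) :
  bf d x (ev 13) = cf x 12 + (-2) * cf x 13 + cf x 14.
Proof. by rewrite bf_ev // gcol13. Qed.
Lemma bfe14 (R : comNzRingType) d (x : 'cV[R]_rk) :
  bf d x (ev 14) = cf x 13 + (-2) * cf x 14 + cf x 15.
Proof. by rewrite bf_ev // gcol14. Qed.
Lemma bfe15 (R : comNzRingType) d (x : 'cV[R]_rk) :
  bf d x (ev 15) = cf x 14 + (-2) * cf x 15 + cf x 16.
Proof. by rewrite bf_ev // gcol15. Qed.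
Lemma bfe16 (R : comNzRingType) d (x : 'cV[R]_rk) :
  bf d x (ev 16) = cf x 15 + (-2) * cf x 16 + cf x 17 + cf x 19.
Proof. by rewrite bf_ev // gcol16. Qed.
Lemma bfe17 (R : comNzRingType) d (x : 'cV[R]_rk) :
  bf d x (ev 17) = cf x 16 + (-2) * cf x 17 + cf x 18.
Proof. by rewrite bf_ev // gcol17. Qed.
Lemma bfe18 (R : comNzRingType) d (x : 'cV[R]_rk) :
  bf d x (ev 18) = cf x 17 + (-2) * cf x 18.
Proof. by rewrite bf_ev // gcol18. Qed.
Lemma bfe19 (R : comNzRingType) d (x : 'cV[R]_rk) :
  bf d x (ev 19) = cf x 16 + (-2) * cf x 19.
Proof. by rewrite bf_ev // gcol19. Qed.
Lemma bfe20 (R : comNzRingType) d (x : 'cV[R]_rk) :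
  bf d x (ev 20) = cD d * cf x 20.
Proof. by rewrite bf_ev // gcol20. Qed.
Lemma inv0 (R : comNzRingType) d (x : 'cV[R]_rk) :
  cf x 0 = bf d x (ev 1).
Proof. rewrite bfe1; ring. Qed.
Lemma inv1 (R : comNzRingType) d (x : 'cV[R]_rk) :
  cf x 1 = bf d x (ev 0).
Proof. rewrite bfe0; ring. Qed.
Lemma inv2 (R : comNzRingType) d (x : 'cV[R]_rk) :
  cf x 2 = bf d x (ev 3).
Proof. rewrite bfe3; ring. Qed.
Lemma inv3 (R : comNzRingType) d (x : 'cV[R]_rk) :
  cf x 3 = bf d x (ev 2).
Proof. rewrite bfe2; ring. Qed.
Lemma inv4 (R : comNzRingType) d (x : 'cV[R]_rk) :
  cf x 4 = (-2) * bf d x (ev 4) + (-3) * bf d x (ev 5) + (-4) * bf d x (ev 6) + (-5) * bf d x (ev 7) + (-6) * bf d x (ev 8) + (-4) * bf d x (ev 9) + (-2) * bf d x (ev 10) + (-3) * bf d x (ev 11).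
Proof. rewrite bfe10 bfe11 bfe4 bfe5 bfe6 bfe7 bfe8 bfe9; ring. Qed.
Lemma inv5 (R : comNzRingType) d (x : 'cV[R]_rk) :
  cf x 5 = (-3) * bf d x (ev 4) + (-6) * bf d x (ev 5) + (-8) * bf d x (ev 6) + (-10) * bf d x (ev 7) + (-12) * bf d x (ev 8) + (-8) * bf d x (ev 9) + (-4) * bf d x (ev 10) + (-6) * bf d x (ev 11).
Proof. rewrite bfe10 bfe11 bfe4 bfe5 bfe6 bfe7 bfe8 bfe9; ring. Qed.
Lemma inv6 (R : comNzRingType) d (x : 'cV[R]_rk) :
  cf x 6 = (-4) * bf d x (ev 4) + (-8) * bf d x (ev 5) + (-12) * bf d x (ev 6) + (-15) * bf d x (ev 7) + (-18) * bf d x (ev 8) + (-12) * bf d x (ev 9) + (-6) * bf d x (ev 10) + (-9) * bf d x (ev 11).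
Proof. rewrite bfe10 bfe11 bfe4 bfe5 bfe6 bfe7 bfe8 bfe9; ring. Qed.
Lemma inv7 (R : comNzRingType) d (x : 'cV[R]_rk) :
  cf x 7 = (-5) * bf d x (ev 4) + (-10) * bf d x (ev 5) + (-15) * bf d x (ev 6) + (-20) * bf d x (ev 7) + (-24) * bf d x (ev 8) + (-16) * bf d x (ev 9) + (-8) * bf d x (ev 10) + (-12) * bf d x (ev 11).
Proof. rewrite bfe10 bfe11 bfe4 bfe5 bfe6 bfe7 bfe8 bfe9; ring. Qed.
Lemma inv8 (R : comNzRingType) d (x : 'cV[R]_rk) :
  cf x 8 = (-6) * bf d x (ev 4) + (-12) * bf d x (ev 5) + (-18) * bf d x (ev 6) + (-24) * bf d x (ev 7) + (-30) * bf d x (ev 8) + (-20) * bf d x (ev 9) + (-10) * bf d x (ev 10) + (-15) * bf d x (ev 11).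
Proof. rewrite bfe10 bfe11 bfe4 bfe5 bfe6 bfe7 bfe8 bfe9; ring. Qed.
Lemma inv9 (R : comNzRingType) d (x : 'cV[R]_rk) :
  cf x 9 = (-4) * bf d x (ev 4) + (-8) * bf d x (ev 5) + (-12) * bf d x (ev 6) + (-16) * bf d x (ev 7) + (-20) * bf d x (ev 8) + (-14) * bf d x (ev 9) + (-7) * bf d x (ev 10) + (-10) * bf d x (ev 11).
Proof. rewrite bfe10 bfe11 bfe4 bfe5 bfe6 bfe7 bfe8 bfe9; ring. Qed.
Lemma inv10 (R : comNzRingType) d (x : 'cV[R]_rk) :
  cf x 10 = (-2) * bf d x (ev 4) + (-4) * bf d x (ev 5) + (-6) * bf d x (ev 6) + (-8) * bf d x (ev 7) + (-10) * bf d x (ev 8) + (-7) * bf d x (ev 9) + (-4) * bf d x (ev 10) + (-5) * bf d x (ev 11).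
Proof. rewrite bfe10 bfe11 bfe4 bfe5 bfe6 bfe7 bfe8 bfe9; ring. Qed.
Lemma inv11 (R : comNzRingType) d (x : 'cV[R]_rk) :
  cf x 11 = (-3) * bf d x (ev 4) + (-6) * bf d x (ev 5) + (-9) * bf d x (ev 6) + (-12) * bf d x (ev 7) + (-15) * bf d x (ev 8) + (-10) * bf d x (ev 9) + (-5) * bf d x (ev 10) + (-8) * bf d x (ev 11).
Proof. rewrite bfe10 bfe11 bfe4 bfe5 bfe6 bfe7 bfe8 bfe9; ring. Qed.
Lemma inv12 (R : comNzRingType) d (x : 'cV[R]_rk) :
  cf x 12 = (-2) * bf d x (ev 12) + (-3) * bf d x (ev 13) + (-4) * bf d x (ev 14) + (-5) * bf d x (ev 15) + (-6) * bf d x (ev 16) + (-4) * bf d x (ev 17) + (-2) * bf d x (ev 18) + (-3) * bf d x (ev 19).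
Proof. rewrite bfe12 bfe13 bfe14 bfe15 bfe16 bfe17 bfe18 bfe19; ring. Qed.
Lemma inv13 (R : comNzRingType) d (x : 'cV[R]_rk) :
  cf x 13 = (-3) * bf d x (ev 12) + (-6) * bf d x (ev 13) + (-8) * bf d x (ev 14) + (-10) * bf d x (ev 15) + (-12) * bf d x (ev 16) + (-8) * bf d x (ev 17) + (-4) * bf d x (ev 18) + (-6) * bf d x (ev 19).
Proof. rewrite bfe12 bfe13 bfe14 bfe15 bfe16 bfe17 bfe18 bfe19; ring. Qed.
Lemma inv14 (R : comNzRingType) d (x : 'cV[R]_rk) :
  cf x 14 = (-4) * bf d x (ev 12) + (-8) * bf d x (ev 13) + (-12) * bf d x (ev 14) + (-15) * bf d x (ev 15) + (-18) * bf d x (ev 16) + (-12) * bf d x (ev 17) + (-6) * bf d x (ev 18) + (-9) * bf d x (ev 19).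
Proof. rewrite bfe12 bfe13 bfe14 bfe15 bfe16 bfe17 bfe18 bfe19; ring. Qed.
Lemma inv15 (R : comNzRingType) d (x : 'cV[R]_rk) :
  cf x 15 = (-5) * bf d x (ev 12) + (-10) * bf d x (ev 13) + (-15) * bf d x (ev 14) + (-20) * bf d x (ev 15) + (-24) * bf d x (ev 16) + (-16) * bf d x (ev 17) + (-8) * bf d x (ev 18) + (-12) * bf d x (ev 19).
Proof. rewrite bfe12 bfe13 bfe14 bfe15 bfe16 bfe17 bfe18 bfe19; ring. Qed.
Lemma inv16 (R : comNzRingType) d (x : 'cV[R]_rk) :
  cf x 16 = (-6) * bf d x (ev 12) + (-12) * bf d x (ev 13) + (-18) * bf d x (ev 14) + (-24) * bf d x (ev 15) + (-30) * bf d x (ev 16) + (-20) * bf d x (ev 17) + (-10) * bf d x (ev 18) + (-15) * bf d x (ev 19).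
Proof. rewrite bfe12 bfe13 bfe14 bfe15 bfe16 bfe17 bfe18 bfe19; ring. Qed.
Lemma inv17 (R : comNzRingType) d (x : 'cV[R]_rk) :
  cf x 17 = (-4) * bf d x (ev 12) + (-8) * bf d x (ev 13) + (-12) * bf d x (ev 14) + (-16) * bf d x (ev 15) + (-20) * bf d x (ev 16) + (-14) * bf d x (ev 17) + (-7) * bf d x (ev 18) + (-10) * bf d x (ev 19).
Proof. rewrite bfe12 bfe13 bfe14 bfe15 bfe16 bfe17 bfe18 bfe19; ring. Qed.
Lemma inv18 (R : comNzRingType) d (x : 'cV[R]_rk) :
  cf x 18 = (-2) * bf d x (ev 12) + (-4) * bf d x (ev 13) + (-6) * bf d x (ev 14) + (-8) * bf d x (ev 15) + (-10) * bf d x (ev 16) + (-7) * bf d x (ev 17) + (-4) * bf d x (ev 18) + (-5) * bf d x (ev 19).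
Proof. rewrite bfe12 bfe13 bfe14 bfe15 bfe16 bfe17 bfe18 bfe19; ring. Qed.
Lemma inv19 (R : comNzRingType) d (x : 'cV[R]_rk) :
  cf x 19 = (-3) * bf d x (ev 12) + (-6) * bf d x (ev 13) + (-9) * bf d x (ev 14) + (-12) * bf d x (ev 15) + (-15) * bf d x (ev 16) + (-10) * bf d x (ev 17) + (-5) * bf d x (ev 18) + (-8) * bf d x (ev 19).
Proof. rewrite bfe12 bfe13 bfe14 bfe15 bfe16 bfe17 bfe18 bfe19; ring. Qed.
Lemma inv_dvd d (x : 'cV[int]_rk) (k : int) :
  (forall j, (j < rk)%N -> (k %| bf d x (ev j))%Z) ->
  forall i, (i < 20)%N -> (k %| cf x i)%Z.
Proof.
move=> H i hi.
have H' : forall j, (j < rk)%N -> forall c : int, (k %| c * bf d x (ev j))%Z.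
  by move=> j hj c; apply: dvdz_mull; apply: H.
do 20 (case: i hi => [|i] hi; first by rewrite ?(inv0 d) ?(inv1 d) ?(inv2 d) ?(inv3 d) ?(inv4 d) ?(inv5 d) ?(inv6 d) ?(inv7 d) ?(inv8 d) ?(inv9 d) ?(inv10 d) ?(inv11 d) ?(inv12 d) ?(inv13 d) ?(inv14 d) ?(inv15 d) ?(inv16 d) ?(inv17 d) ?(inv18 d) ?(inv19 d) ?rpredD ?H ?H').
by [].
Qed.

Lemma inv_int d (x : 'cV[rat]_rk) :
  (forall j, (j < rk)%N -> bf d x (ev j) \is a Num.int) ->
  forall i, (i < 20)%N -> cf x i \is a Num.int.
Proof.
move=> H i hi.
do 20 (case: i hi => [|i] hi; first by rewrite ?(inv0 d) ?(inv1 d) ?(inv2 d) ?(inv3 d) ?(inv4 d) ?(inv5 d) ?(inv6 d) ?(inv7 d) ?(inv8 d) ?(inv9 d) ?(inv10 d) ?(inv11 d) ?(inv12 d) ?(inv13 d) ?(inv14 d) ?(inv15 d) ?(inv16 d) ?(inv17 d) ?(inv18 d) ?(inv19 d) ?rpredD ?rpredM ?rpredN ?rpred_nat ?H).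
by [].
Qed.

Lemma prim_int (r w : 'cV[int]_rk) (q : rat) :
  primitive r -> q *: toQ r = toQ w -> q \is a Num.int.
Proof.
move=> hp hw.
have hb : 0 < denq q := denq_gt0 q.
have hcop : coprimez (denq q) (numq q).
  by rewrite /coprimez /gcdz gcdnC; apply: coprime_num_den.
have hdiv : forall i, r i 0 \in dvdz (denq q).
  move=> i; move/matrixP/(_ i 0): hw; rewrite !mxE => e.
  have e2 : numq q * r i 0 = w i 0 * denq q.
    apply: (@intr_inj rat); rewrite !rmorphM /= numqE -e; ring.
  by rewrite -(Gauss_dvdzr _ hcop) e2 dvdz_mull.
pose s : 'cV[int]_rk := \col_i divz (r i 0) (denq q).
have er : r = denq q *: s.
  by apply/matrixP => i j; rewrite (ord1 j) !mxE [RHS]mulrC divzK.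
have := hp _ _ er; rewrite gtr0_norm // => hb1.
by rewrite -(divq_num_den q) hb1 divr1 intr_int.
Qed.

Lemma F1 d (r : 'cV[int]_rk) : (0 < d)%N -> primitive r ->
  LformZ d r r = - ((2 * d)%N : int) -> in_OL d (refl_mx d r) ->
  forall j, (j < rk)%N -> ((d : int) %| bf d r (ev j))%Z.
Proof.
move=> hd hp hN hOL j hj.
have h2d : (0 < ((2 * d)%N : int)) by rewrite ltz_nat muln_gt0 hd.
have hN0 : LformZ d r r != 0 by rewrite hN oppr_eq0 gt_eqF.
have := g_act (K := rat) (toQ (ev j)) hOL hN0.
rewrite -map_mxM => eg.
have : (1 * (2 * bf d (toQ (ev j)) (toK r) / bf d (toK r) (toK r))) *: toQ r
       = toQ (ev j + gM d r *m ev j).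
  rewrite /toQ map_mxD -/(toQ _) -/(toQ _) eg /st opprB addrC subrK.
  done.
move/prim_int => /(_ hp); rewrite !bf_toK hN mul1r.
move/intrP => [z hz].
apply/dvdzP; exists (- z).
apply: (@intr_inj rat).
have hd0 : (d%:R : rat) != 0 by rewrite pnatr_eq0 -lt0n.
rewrite bfC -LformZ_bf.
have e2 : (((2 * d)%N : int)%:~R : rat) = 2 * d%:R.
  by rewrite -[LHS]/((2 * d)%:R) natrM.
have e1 : ((d : int)%:~R : rat) = d%:R by [].
rewrite rmorphM rmorphN /= -hz rmorphN /= e2 e1.
by field.
Qed.
Lemma F3 d (r : 'cV[int]_rk) : (0 < d)%N -> LformZ d r r = - ((2 * d)%N : int) ->
  (forall i, (i < 20)%N -> ((d : int) %| cf r i)%Z) ->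
  ((d : int) %| cf r 20 ^+ 2 - 1)%Z.
Proof.
move=> hd hN H.
have h2d : (0 < ((2 * d)%N : int)) by rewrite ltz_nat muln_gt0 hd.
have [s0 e0] := dvdzP (H 0%N isT).
have [s1 e1] := dvdzP (H 1%N isT).
have [s2 e2] := dvdzP (H 2%N isT).
have [s3 e3] := dvdzP (H 3%N isT).
have [s4 e4] := dvdzP (H 4%N isT).
have [s5 e5] := dvdzP (H 5%N isT).
have [s6 e6] := dvdzP (H 6%N isT).
have [s7 e7] := dvdzP (H 7%N isT).
have [s8 e8] := dvdzP (H 8%N isT).
have [s9 e9] := dvdzP (H 9%N isT).
have [s10 e10] := dvdzP (H 10%N isT).
have [s11 e11] := dvdzP (H 11%N isT).
have [s12 e12] := dvdzP (H 12%N isT).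
have [s13 e13] := dvdzP (H 13%N isT).
have [s14 e14] := dvdzP (H 14%N isT).
have [s15 e15] := dvdzP (H 15%N isT).
have [s16 e16] := dvdzP (H 16%N isT).
have [s17 e17] := dvdzP (H 17%N isT).
have [s18 e18] := dvdzP (H 18%N isT).
have [s19 e19] := dvdzP (H 19%N isT).
move: hN; rewrite LformZ_bf bfE /bfF e0 e1 e2 e3 e4 e5 e6 e7 e8 e9 e10 e11 e12 e13 e14 e15 e16 e17 e18 e19 /cD intz.
set m := cf r 20.
move=> hN.
have key : forall X : int, X = - ((2 * d)%N : int) ->
    X + ((2 * d)%N : int) = ((2 * d)%N : int) * ((d : int) * (s0 * s1 + s2 * s3 + (-1) * (s4 * s4) + s4 * s5 + (-1) * (s5 * s5) + s5 * s6 + (-1) * (s6 * s6) + s6 * s7 + (-1) * (s7 * s7) + s7 * s8 + (-1) * (s8 * s8) + s8 * s9 + s8 * s11 + (-1) * (s9 * s9) + s9 * s10 + (-1) * (s10 * s10) + (-1) * (s11 * s11) + (-1) * (s12 * s12) + s12 * s13 + (-1) * (s13 * s13) + s13 * s14 + (-1) * (s14 * s14) + s14 * s15 + (-1) * (s15 * s15) + s15 * s16 + (-1) * (s16 * s16) + s16 * s17 + s16 * s19 + (-1) * (s17 * s17) + s17 * s18 + (-1) * (s18 * s18) + (-1) * (s19 * s19)) - (m ^+ 2 - 1)) ->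
    ((d : int) %| m ^+ 2 - 1)%Z.
  move=> X -> ; rewrite addNr => /esym /eqP; rewrite mulf_eq0 (gt_eqF h2d) /= subr_eq0 => /eqP <-.
  by apply: dvdz_mulr; apply: dvdzz.
apply: (key _ hN); ring.
Qed.

Lemma bf_expand (R : comNzRingType) d (x y : 'cV[R]_rk) :
  bf d x y = \sum_(j < rk) bf d x (ev j) * y j 0.
Proof. by rewrite bf_sum; apply: eq_bigr => j _; rewrite bf_ev. Qed.

Lemma discr d r : (0 < d)%N -> primitive r ->
  LformZ d r r = - ((2 * d)%N : int) -> in_OL d (refl_mx d r) ->
  acts_trivially_on_discr d (gM d r).
Proof.
move=> hd hp hN hOL v hv.
have h2d : (0 < ((2 * d)%N : int)) by rewrite ltz_nat muln_gt0 hd.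
have hN0 : LformZ d r r != 0 by rewrite hN oppr_eq0 gt_eqF.
have hd0 : (d%:R : rat) != 0 by rewrite pnatr_eq0 -lt0n.
have e2 : (((2 * d)%N : int)%:~R : rat) = 2 * d%:R.
  by rewrite -[LHS]/((2 * d)%:R) natrM.
have hF1 := F1 hd hp hN hOL.
have hF2 := inv_dvd hF1.
have hF3 := F3 hd hN hF2.
have hn : forall j, (j < rk)%N -> bf d v (ev j) \is a Num.int.
  move=> j hj; have [z hz] := hv (ev j).
  have -> : bf d v (ev j) = LformQ d v (toQ (ev j)).
    congr (bf d v _); apply/matrixP => a b; rewrite !mxE.
    by case: (_ && _).
  by rewrite hz intr_int.
have hvi := inv_int hn.
suff Hw : forall i, (map_mx intr (gM d r) *m v - v) i 0 \is a Num.int.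
  move: (map_mx intr (gM d r) *m v - v) Hw => w Hw.
  exists (\col_i numq (w i 0)); apply/matrixP => i j.
  rewrite (ord1 j) /toQ !mxE; have /intrP [z ->] := Hw i.
  by rewrite numq_int.
move=> i; rewrite (g_act (K := rat)) // /st !mxE bf_toK hN.
set K := bf d v (toK r).
have eK : K = \sum_(j < rk) bf d v (ev j) * (r j 0)%:~R.
  by rewrite /K bf_expand; apply: eq_bigr => j _; rewrite !mxE.
have hK : K \is a Num.int.
  by rewrite eK; apply: rpred_sum => j _; rewrite rpredM ?intr_int ?hn.
rewrite rmorphN /= e2.
case: (ltnP i 20) => hi.
  have hv' : v i 0 \is a Num.int by have := hvi i hi; rewrite /cf inord_val.
  have [s es] := dvdzP (hF2 i hi); move: es; rewrite /cf inord_val => es.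
  rewrite es rmorphM /=.
  have -> : - (v i 0 - 1 * (2 * K / - (2 * d%:R)) * (s%:~R * (d : int)%:~R)) - v i 0
     = - (2 * v i 0) - K * s%:~R.
    by rewrite -[((d : int)%:~R : rat)]/(d%:R); field.
  by rewrite rpredB ?rpredN ?rpredM ?rpred_nat ?intr_int.
have ei : i = ord_max.
  by apply: val_inj => /=; apply/eqP; rewrite eqn_leq hi andbT -ltnS; exact: ltn_ord i.
subst i.
have io : inord 20 = ord_max :> 'I_rk by apply: val_inj; rewrite /= inordK.
set vv := v ord_max 0; set m := r ord_max 0.
set nn := bf d v (ev 20).
have hnn : nn \is a Num.int by apply: hn.
have hvv : vv = - nn / (2 * d%:R).
  rewrite /nn bfe20 /cf io /cD rmorphN /= e2 -/vv; field.
  by [].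
pose s : 'cV[int]_rk := \col_j (if (j < 20)%N then divz (r j 0) d else 0).
have er : r = (d : int) *: s + m *: ev 20.
  apply/matrixP => j k; rewrite (ord1 k) !mxE.
  case: (ltnP j 20) => hj.
    have hne : (j == inord 20) = false.
      by apply/negbTE; apply/eqP => /(congr1 val); rewrite /= inordK // => ej; move: hj; rewrite ej.
    rewrite hne /= mulr0 addr0 mulrC divzK //.
    by have := hF2 j hj; rewrite /cf inord_val.
  have ej : j = ord_max.
    by apply: val_inj => /=; apply/eqP; rewrite eqn_leq hj andbT -ltnS; exact: ltn_ord j.
  by rewrite ej io eqxx /= mulr0 add0r mulr1.
have eK2 : K = d%:R * bf d v (toK s) + m%:~R * nn.
  have eev : toK (ev 20 : 'cV[int]_rk) = ev 20 :> 'cV[rat]_rk.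
    by apply/matrixP => a b; rewrite !mxE; case: (_ && _).
  rewrite /K er /toK map_mxD !map_mxZ -/(toK _) -/(toK _) eev bfDr !bfZr /=.
  by [].
have hT : bf d v (toK s) \is a Num.int.
  rewrite bf_expand; apply: rpred_sum => j _; rewrite rpredM ?hn //.
  by rewrite !mxE intr_int.
have [q hq] := dvdzP hF3.
have hq' : (m%:~R : rat) ^+ 2 - 1 = q%:~R * d%:R.
  have := congr1 (intr : int -> rat) hq.
  rewrite /cf io -/m rmorphB rmorphXn rmorphM /= => ->; by [].
rewrite -/vv -/m hvv eK2.
set T := bf d v (toK s).
suff key : forall X : rat,
    X = - (nn * q%:~R) - T * m%:~R + nn / d%:R * (q%:~R * d%:R - ((m%:~R) ^+ 2 - 1)) ->
    X \is a Num.int.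
  by apply: key; field.
move=> X ->; rewrite hq' subrr mulr0 addr0.
by rewrite rpredB ?rpredN ?rpredM ?intr_int.
Qed.

Definition RR := Rdefinitions.R.
Definition cpx (A B : 'cV[RR]_rk) : 'cV[C]_rk := \col_i (Complex (A i 0) (B i 0)).
Definition embV (x : 'cV[RR]_rk) : 'cV[C]_rk := map_mx (real_complex RR) x.

Lemma cmk (a b : RR) : (a%:C)%C + 'i * (b%:C)%C = Complex a b :> C.
Proof. by rewrite -complexiE; simpc. Qed.

Lemma decompZ (Z : 'cV[C]_rk) :
  Z = cpx (map_mx (@complex.Re RR) Z) (map_mx (@complex.Im RR) Z).
Proof. by apply/matrixP => i j; rewrite (ord1 j) !mxE; case: (Z i 0). Qed.

Lemma cpxE A B : cpx A B = embV A + 'i *: embV B.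
Proof. by apply/matrixP => i j; rewrite (ord1 j) !mxE cmk. Qed.

Lemma bf_cpx_emb d A B x :
  bf d (cpx A B) (embV x) = Complex (bf d A x) (bf d B x).
Proof. by rewrite cpxE bfDl bfZl /embV !bf_map cmk. Qed.

Lemma bf_cpx d A B A' B' :
  bf d (cpx A B) (cpx A' B') =
  Complex (bf d A A' - bf d B B') (bf d B A' + bf d A B').
Proof.
rewrite [cpx A' B']cpxE bfDr bfZr !bf_cpx_emb -complexiE; simpc.
by congr Complex; ring.
Qed.

Lemma conj_cpx A B : map_mx Num.conj (cpx A B) = cpx A (- B).
Proof. by apply/matrixP => i j; rewrite !mxE. Qed.

Lemma p1E : p1 = embV pv1.
Proof. by apply/matrixP => i j; rewrite !mxE; case: ifP. Qed.
Lemma p2E : p2 = embV pv2.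
Proof. by apply/matrixP => i j; rewrite !mxE; case: ifP. Qed.

Definition cone_R d (A B : 'cV[RR]_rk) : Prop :=
  [/\ bf d A A = bf d B B, bf d A B = 0, 0 < bf d A A + bf d B B & 0 < Ori d A B].

Lemma coneE d A B : in_cone d (cpx A B) <-> cone_R d A B.
Proof.
rewrite /in_cone /cone_R /LformC -/(bf d _ _) -/(bf d _ _) -/(bf d _ _) -/(bf d _ _).
rewrite -/(bf d _ _) -/(bf d _ _).
rewrite conj_cpx !bf_cpx p1E p2E !bf_cpx_emb -!complexRe -!complexIm /=.
rewrite !bfNr (bfC d B A) opprK subrr.
have E1 : forall x y : RR, (Complex x y = 0 :> C) <-> (x = 0 /\ y = 0).
  by move=> x y; split; [case | case=> -> ->].
have E2 : forall x : RR, (0 < Complex x 0 :> C) = (0 < x).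
  by move=> x; rewrite ltcE /= eqxx.
rewrite E2 -!rmorphM -rmorphB /= -[0 : C]/((0 : RR)%:C)%C ltcR.
split.
  case=> /E1 [h1 h2] h3 h4; split => //.
    by apply/eqP; rewrite -subr_eq0 h1.
  by move: h2; rewrite -mulr2n => /eqP; rewrite mulrn_eq0 /= => /eqP.
case=> h1 h2 h3 h4; split => //.
by apply/E1; rewrite h1 subrr h2 addr0.
Qed.

Lemma g_cpx d r A B :
  toCm (gM d r) *m cpx A B =
  cpx (map_mx intr (gM d r) *m A) (map_mx intr (gM d r) *m B).
Proof.
have -> : toCm (gM d r) = map_mx (real_complex RR) (map_mx intr (gM d r)).
  by apply/matrixP => i j; rewrite !mxE rmorph_int.
by rewrite !cpxE mulmxDr -scalemxAr /embV !map_mxM.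
Qed.

Lemma Ori_N (R : comNzRingType) d (x y : 'cV[R]_rk) : Ori d (- x) (- y) = Ori d x y.
Proof. by rewrite /Ori !bfNl; ring. Qed.

Lemma cone_iff_R d r (A B : 'cV[RR]_rk) : (0 < d)%N ->
  LformZ d r r = - ((2 * d)%N : int) -> in_OL d (refl_mx d r) ->
  cone_R d A B <-> cone_R d (map_mx intr (gM d r) *m A) (map_mx intr (gM d r) *m B).
Proof.
move=> hd hN hOL.
have h2d : (0 < ((2 * d)%N : int)) by rewrite ltz_nat muln_gt0 hd.
have hN0 : LformZ d r r != 0 by rewrite hN oppr_eq0 gt_eqF.
set gR := map_mx intr (gM d r) : 'M[RR]_rk.
have hiso : gR^T *m map_mx intr (gram d) *m gR = map_mx intr (gram d).
  have := congr1 (map_mx (intr : int -> RR)) (g_iso hOL).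
  by rewrite !map_mxM -map_trmx.
have iso : forall x y, bf d (gR *m x) (gR *m y) = bf d x y.
  by move=> x y; apply: bf_iso.
have hNr : bf d (toK r) (toK r) < 0 :> RR.
  by rewrite bf_toK hN rmorphN /= oppr_lt0 ltr0z.
have hO : forall x y, Ori d (gR *m x) (gR *m y) = Ori d (st d (toK r) 1 x) (st d (toK r) 1 y).
  by move=> x y; rewrite /gR !g_act // Ori_N.
rewrite /cone_R !iso hO.
split; case=> h1 h2 h3 h4; (split => //); have hA : 0 < bf d A A by
  (have : 0 < bf d A A + bf d A A by rewrite {2}h1; lra); lra.
  by rewrite -ori_core.
by rewrite (ori_core hNr h1 h2 hA).
Qed.

Lemma g_SO d r : (0 < d)%N -> primitive r ->
  LformZ d r r = - ((2 * d)%N : int) -> in_OL d (refl_mx d r) ->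
  in_SOtilde_plus d (gM d r).
Proof.
move=> hd hp hN hOL.
have h2d : (0 < ((2 * d)%N : int)) by rewrite ltz_nat muln_gt0 hd.
have hN0 : LformZ d r r != 0 by rewrite hN oppr_eq0 gt_eqF.
split.
- exact: g_iso.
- exact: g_det.
- move=> Z; rewrite [in X in _ <-> X](decompZ Z) g_cpx.
  rewrite {1}(decompZ Z) !coneE.
  exact: cone_iff_R.
- exact: discr.
Qed.

Unset Implicit Arguments.
Theorem lemma6p2 (d k : nat) (F : 'cV[C]_rk -> C) :
  (0 < d)%N ->
  modular_form d (2 * k + 1) F ->
  forall r : 'cV[int]_rk,
    primitive r ->
    LformZ d r r = - ((2 * d)%N : int) ->
    in_OL d (refl_mx d r) ->
    forall Z : 'cV[C]_rk, in_cone d Z -> LformC d Z (toC r) = 0 -> F Z = 0.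
Proof.
move=> hd [hol hom hinv] r hp hN hOL Z hZ hZr.
have h2d : (0 < ((2 * d)%N : int)) by rewrite ltz_nat muln_gt0 hd.
have hN0 : LformZ d r r != 0 by rewrite hN oppr_eq0 gt_eqF.
have hS := g_SO hd hp hN hOL.
have e1 : toCm (gM d r) *m Z = - Z.
  rewrite /toCm (g_act (K := C)) // /st.
  have -> : bf d Z (toK r) = 0 := hZr.
  by rewrite mulr0 mul0r mulr0 scale0r subr0.
have hF := hinv _ _ hS hZ; rewrite e1 in hF.
have hm1 : (-1 : C) != 0 by rewrite oppr_eq0 oner_eq0.
have := hom (-1) Z hm1 hZ; rewrite scaleN1r hF.
rewrite exprD expr1 exprM sqrrN expr1n expr1n mul1r invrN invr1 mulN1r.
move/eqP; rewrite -subr_eq0 opprK -mulr2n mulrn_eq0 /=.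
by move/eqP.
Qed.
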